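(* Let $f\colon\{0,1\}^n\to\{0,1\}^n$ and $F(x,i)=f(x)_{1,\ldots,i-1}$ on $\{0,1\}^n\times[n]$. Let $A^*$ be the randomized algorithm that on input $(x,i)$ outputs a uniformly random $x'\in\{0,1\}^n$ with $f(x')_{1,\ldots,i-1}=f(x)_{1,\ldots,i-1}$. Consider the oracle algorithm $\mathrm{ExtendOne}^{C}(x,b,i)$: set $j:=0$; repeat { $x':=C(x,i)$ with fresh randomness; $j:=j+1$ } until $f(x')_i=b$; return $(x',j)$. Consider the oracle algorithm $\mathrm{Inv}^{C}(y)$ for $y\in\{0,1\}^n$: choose $x^{(0)}$ uniformly in $\{0,1\}^n$; for $i=1$ to $n$ let $(x^{(i)},j):=\mathrm{ExtendOne}^{C}(x^{(i-1)},y_i,i)$; return $x^{(n)}$. Then the expected number of calls to $A^*$ in a random execution of $\mathrm{Inv}^{A^*}(y)$ with $y=f(x)$ for $x$ uniform in $\{0,1\}^n$ is at most $2n$.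
   Context: $y_i$ denotes the $i$-th bit of $y$ and $y_{1,\ldots,i}$ its first $i$ bits. *)

(* Defs.v *)
From HB Require Import structures.
From mathcomp Require Import all_boot all_order all_algebra.
From mathcomp Require Import all_classical all_reals all_analysis.
Set Implicit Arguments. Unset Strict Implicit. Unset Printing Implicit Defensive.
Import Order.TTheory GRing.Theory Num.Theory.
Local Open Scope ring_scope.

(* Bit strings of length n; bit k (0-indexed) of u is u k.
   Paper's 1-indexed round i in [n] is our 0-indexed stage i : 'I_n, so
   "first i-1 bits" = bits with index < i (0-indexed). *)
Definition bits (n : nat) := {ffun 'I_n -> bool}.

Section Inv.
Variables (R : realType) (n : nat) (f : bits n -> bits n).

Definition agree (i : nat) (u v : bits n) : bool :=
  [forall k : 'I_n, (k < i)%N ==> (u k == v k)].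

Definition Astar_supp (x : bits n) (i : 'I_n) : {set bits n} :=
  [set x' | agree i (f x') (f x)].

Definition Astar_prob (x : bits n) (i : 'I_n) (x' : bits n) : R :=
  if x' \in Astar_supp x i then (#|Astar_supp x i|%:R)^-1 else 0.

(* cs = sequence of outputs of the oracle calls during ExtendOne(x,b,i);
   it is a terminating run iff it is nonempty, its last element c has
   f(c)_i = b, and all earlier ones have f(.)_i <> b. *)
Definition extend_ok (b : bool) (i : 'I_n) (cs : seq (bits n)) : bool :=
  match rev cs with
  | [::] => false
  | c :: fails => (f c i == b) && all (fun d => f d i != b) fails
  end.

(* Probability of the terminating run cs of ExtendOne^{A^*}(x,b,i)
   (each call uses fresh independent randomness). *)
Definition extend_weight (x : bits n) (b : bool) (i : 'I_n)
    (cs : seq (bits n)) : R :=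
  if extend_ok b i cs then \prod_(c <- cs) Astar_prob x i c else 0.

(* Probability of the sequence of rounds [stages] (each round's call
   outputs given by css), starting from current point x, with target y.
   The output of ExtendOne is the last call output, [last x cs]. *)
Fixpoint run_weight (y : bits n) (stages : seq 'I_n) (x : bits n)
    (css : seq (seq (bits n))) : R :=
  match stages, css with
  | [::], [::] => 1
  | i :: st, cs :: css' =>
      extend_weight x (y i) i cs * run_weight y st (last x cs) css'
  | _, _ => 0
  end.

(* A terminating execution of Inv^{A^*}(y) is determined by x^(0) and
   the oracle outputs of rounds 1..n; its probability: *)
Definition trace_weight (y : bits n) (t : bits n * seq (seq (bits n))) : R :=
  (#|{: bits n}|%:R)^-1 * run_weight y (enum 'I_n) t.1 t.2.

Definition trace_calls (t : bits n * seq (seq (bits n))) : nat :=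
  sumn (map size t.2).

(* Expected number of calls to A^* in a random execution of Inv^{A^*}(y).
   If non-termination has positive probability (terminating runs have
   total probability < 1), the expectation is +oo. *)
Definition expected_calls (y : bits n) : \bar R :=
  if (\esum_(t in [set: bits n * seq (seq (bits n))])
        (trace_weight y t)%:E == 1%E)
  then \esum_(t in [set: bits n * seq (seq (bits n))])
         (trace_weight y t * (trace_calls t)%:R)%:E
  else +oo%E.

Definition expected_calls_random : \bar R :=
  (\sum_(x : bits n) ((#|{: bits n}|%:R)^-1)%:E * expected_calls (f x))%E.

End Inv.

(* Main.v *)
Require Import Defs.
From HB Require Import structures.
From mathcomp Require Import all_boot all_order all_algebra.
From mathcomp Require Import all_classical all_reals all_analysis.
From mathcomp Require Import ring lra.
Import Order.TTheory GRing.Theory Num.Theory.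
Local Open Scope ring_scope.

Section Generic.
Variable R : realType.
Local Open Scope classical_set_scope.
Local Open Scope ereal_scope.

Lemma esumZl (T : choiceType) (S : set T) (a : T -> \bar R) (r : R) :
  (0 <= r)%R -> (forall x, 0 <= a x) ->
  \esum_(i in S) (r%:E * a i) = r%:E * \esum_(i in S) a i.
Proof.
move=> r0 a0; rewrite /esum -ereal_supZl //; last first.
  apply/set0P; exists (\sum_(x \in set0) a x); exists set0 => //.
  exact: fsets_set0.
congr ereal_sup; apply/seteqP; split => z /=.
- move=> [X [finX XS] <-]; exists (\sum_(x \in X) a x); first by exists X.
  by rewrite !fsbig_finite // ge0_sume_distrr.
- move=> [_ [X [finX XS] <-] <-]; exists X => //.
  by rewrite !fsbig_finite // ge0_sume_distrr.
Qed.

Lemma esum_seqE (T : choiceType) (h : seq T -> \bar R) : (forall s, 0 <= h s) ->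
  \esum_(s in [set: seq T]) h s =
  h [::] + \esum_(c in [set: T]) \esum_(s in [set: seq T]) h (c :: s).
Proof.
move=> h0.
rewrite (esumID [set [::]]) //; rewrite setTI esum_set1 //; congr (_ + _).
rewrite esum_esum //.
rewrite (reindex_esum ([set: T] `*`` fun _ => setT) _ (fun k => k.1 :: k.2)) //.
split.
- by move=> [c s] _ /=; split.
- by move=> [c s] [c' s'] _ _ /= [-> ->].
- move=> [|c s] [_ /=]; first by [].
  by move=> _; exists (c, s).
Qed.

Lemma esum_pairE (A B : choiceType) (h : A * B -> \bar R) : (forall t, 0 <= h t) ->
  \esum_(t in [set: A * B]) h t = \esum_(a in [set: A]) \esum_(b in [set: B]) h (a, b).
Proof.
move=> h0; rewrite esum_esum //.
have -> : [set: A] `*`` (fun _ => [set: B]) = [set: A * B] by apply/seteqP; split.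
by apply: eq_esum => -[].
Qed.

Lemma esum_finT (T : finType) (a : T -> \bar R) : (forall x, 0 <= a x) ->
  \esum_(x in [set: T]) a x = \sum_(x : T) a x.
Proof.
move=> a0; rewrite esum_fset //; last exact: finite_finset.
rewrite fsbig_finite; last exact: finite_finset.
apply: perm_big; apply: uniq_perm; first exact: finmap.fset_uniq.
  exact: index_enum_uniq.
move=> x; rewrite mem_index_enum; have := in_fset_set (@finite_finset _ [set: T]) x.
by move=> /= ->; apply/mem_set.
Qed.

Lemma esum_trunc (T : choiceType) (h : seq T -> \bar R) (M : \bar R) :
  (forall s, 0 <= h s) ->
  (forall N, \esum_(s in [set: seq T]) (if (size s <= N)%N then h s else 0) <= M) ->
  \esum_(s in [set: seq T]) h s <= M.
Proof.
move=> h0 hN; apply: ge_ereal_sup => _ [X [finX _] <-].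
have [B XB] := finite_fsetP.1 finX.
have := hN (\max_(s <- finmap.enum_fset B) size s)%N; apply: le_trans; apply: esum_ge.
exists X; first by split.
rewrite le_eqVlt; apply/orP; left; apply/eqP; apply: eq_fsbigr => s sB.
rewrite ifT //; apply: leq_bigmax_seq => //.
by move: sB; rewrite XB inE.
Qed.

End Generic.

Section Main.
Variables (R : realType) (n : nat) (f : bits n -> bits n).

Notation P := (@Astar_prob R n f).
Notation W := (@extend_weight R n f).
Notation supp := (@Astar_supp n f).

Lemma agree_refl i (u : bits n) : agree i u u.
Proof. by apply/forallP => k; apply/implyP. Qed.

Lemma agree_sym i (u v : bits n) : agree i u v = agree i v u.
Proof.
by apply/forallP/forallP => H k; apply/implyP => /(implyP (H k)) /eqP ->.
Qed.

Lemma agree_trans i (u v w : bits n) : agree i u v -> agree i v w -> agree i u w.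
Proof.
move=> /forallP H1 /forallP H2; apply/forallP => k; apply/implyP => ki.
by rewrite (eqP (implyP (H1 k) ki)) (implyP (H2 k) ki).
Qed.

Lemma agree0 (u v : bits n) : agree 0 u v.
Proof. by apply/forallP => k; apply/implyP. Qed.

Lemma agreeS (i : 'I_n) (u v : bits n) :
  agree i.+1 u v = agree i u v && (u i == v i).
Proof.
apply/idP/andP.
- move=> /forallP H; split; last by apply: (implyP (H i)).
  by apply/forallP => k; apply/implyP => ki; apply: (implyP (H k)); apply: ltnW.
- move=> [/forallP H1 /eqP H2]; apply/forallP => k; apply/implyP.
  rewrite ltnS leq_eqVlt => /orP[/eqP ki|ki]; last exact: (implyP (H1 k)).
  have -> : k = i by apply: val_inj.
  by rewrite H2.
Qed.

Lemma ok_cons b i c s : extend_ok f b i (c :: s) =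
  if s is [::] then f c i == b else (f c i != b) && extend_ok f b i s.
Proof.
case: s => [|d s]; first by rewrite /extend_ok /= andbT.
rewrite /extend_ok rev_cons.
case E: (rev (d :: s)) => [|e fs]; first by move/(congr1 size): E; rewrite size_rev.
by rewrite rcons_cons /= all_rcons andbCA.
Qed.

Lemma W_nil x b i : W x b i [::] = 0.
Proof. by []. Qed.

Lemma P_ge0 x i c : 0 <= P x i c.
Proof. by rewrite /Astar_prob; case: ifP => // _; rewrite invr_ge0 ler0n. Qed.

Lemma W_ge0 x b i s : 0 <= W x b i s.
Proof.
rewrite /extend_weight; case: ifP => // _; apply: prodr_ge0 => *; exact: P_ge0.
Qed.

Lemma W_fail x b i c s : f c i != b -> W x b i (c :: s) = P x i c * W x b i s.
Proof.
move=> H; rewrite /extend_weight ok_cons big_cons.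
case: s => [|d s]; first by rewrite (negPf H) mulr0.
by rewrite H /=; case: ifP; rewrite ?mulr0.
Qed.

Lemma W_succ x b i c s : f c i = b ->
  W x b i (c :: s) = if s is [::] then P x i c else 0.
Proof.
move=> H; case: s => [|d s]; rewrite /extend_weight ok_cons H eqxx //=.
by rewrite big_cons big_nil mulr1.
Qed.

Lemma supp_x x i : x \in supp x i.
Proof. by rewrite inE agree_refl. Qed.

Lemma sumP x i : \sum_c P x i c = 1.
Proof.
rewrite /Astar_prob -big_mkcond /= sumr_const -[_ *+ _]mulr_natr mulVf //.
rewrite pnatr_eq0 -lt0n; apply/card_gt0P; exists x; exact: supp_x.
Qed.

Lemma W_last x b i s : W x b i s != 0 ->
  (last x s \in supp x i) && (f (last x s) i == b).
Proof.
elim: s => [|c s IH]; first by rewrite W_nil eqxx.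
move=> H; case: (eqVneq (f c i) b) => Hc.
- rewrite W_succ // in H; case: s IH H => [|d s] _ H; last by move: H => /=; rewrite eqxx.
  rewrite /= Hc eqxx andbT; move: H; rewrite /Astar_prob; case: ifP => //.
  by rewrite eqxx.
- rewrite W_fail // mulf_eq0 negb_or in H; case/andP: H => _ Hs.
  case: s IH Hs => [|d s] IH Hs; first by rewrite W_nil eqxx in Hs.
  exact: IH Hs.
Qed.


Section Stage.
Variables (x : bits n) (b : bool) (i : 'I_n).
Local Open Scope ereal_scope.

Definition WE (phi : seq (bits n) -> \bar R) :=
  \esum_(s in [set: seq (bits n)]) ((W x b i s)%:E * phi s).

Lemma WE_ge0 phi : (forall s, 0 <= phi s) -> 0 <= WE phi.
Proof. by move=> h; apply: esum_ge0 => s _; rewrite mule_ge0 // lee_fin W_ge0. Qed.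

Lemma WE_rec phi : (forall s, 0 <= phi s) ->
  WE phi = \sum_(c : bits n) (if f c i == b then (P x i c)%:E * phi [:: c]
                             else (P x i c)%:E * WE (fun s => phi (c :: s))).
Proof.
move=> h0; rewrite /WE esum_seqE; last by move=> s; rewrite mule_ge0 // lee_fin W_ge0.
rewrite W_nil mul0e add0e esum_finT; last first.
  by move=> c; apply: esum_ge0 => s _; rewrite mule_ge0 // lee_fin W_ge0.
apply: eq_bigr => c _; case: eqP => Hc.
- rewrite esum_seqE; last by move=> s; rewrite mule_ge0 // lee_fin W_ge0.
  rewrite W_succ // esum1 ?adde0 // => c' _.
  by rewrite esum1 // => s' _; rewrite W_succ // mul0e.
- transitivity (\esum_(s in [set: seq (bits n)])
      ((P x i c)%:E * ((W x b i s)%:E * phi (c :: s)))).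
    apply: eq_esum => s _; rewrite W_fail; last by apply/eqP.
    by rewrite EFinM muleA.
  rewrite esumZl //; first exact: P_ge0.
  by move=> s; rewrite mule_ge0 // lee_fin W_ge0.
Qed.

Definition pp := (\sum_(c : bits n) (if f c i == b then P x i c else 0))%R.
Definition qq := (\sum_(c : bits n) (if f c i == b then 0 else P x i c))%R.

Lemma pq1 : (pp + qq = 1)%R.
Proof.
rewrite /pp /qq -big_split /= -(sumP x i); apply: eq_bigr => c _.
by case: ifP; rewrite ?addr0 ?add0r.
Qed.

Lemma sum_eq (U V : R) :
  \sum_(c : bits n) (if f c i == b then (P x i c)%:E * U%:E
                     else (P x i c)%:E * V%:E) = (pp * U + qq * V)%:E.
Proof.
rewrite /pp /qq !mulr_suml -big_split /= -sumEFin; apply: eq_bigr => c _.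
by case: ifP => _; rewrite ?mul0r ?addr0 ?add0r EFinM.
Qed.

Lemma sum_bound (u v : bits n -> \bar R) (U V : R) :
  (forall c, u c <= U%:E) -> (forall c, v c <= V%:E) ->
  \sum_(c : bits n) (if f c i == b then (P x i c)%:E * u c
                     else (P x i c)%:E * v c) <= (pp * U + qq * V)%:E.
Proof.
move=> hu hv; rewrite -sum_eq; apply: lee_sum => c _.
by case: ifP => _; apply: lee_wpmul2l; rewrite ?lee_fin ?P_ge0.
Qed.

Definition T1 N := WE (fun s => if (size s <= N)%N then 1 else 0).
Definition T2 N := WE (fun s => if (size s <= N)%N then (size s)%:R%:E else 0).

Lemma T1_le N : T1 N <= 1.
Proof.
elim: N => [|N IH].
  rewrite /T1 /WE esum1 // => -[|c s] _; first by rewrite W_nil mul0e.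
  by rewrite /= mule0.
rewrite /T1 WE_rec; last by move=> s; case: ifP.
apply: (@le_trans _ _ ((pp * 1 + qq * 1)%R)%:E); last by rewrite !mulr1 pq1.
apply: sum_bound => c /=; first by rewrite lee_fin.
exact: IH.
Qed.

Lemma WE1_le : WE (fun _ => 1) <= 1.
Proof.
rewrite /WE; apply: esum_trunc => [s|N]; first by rewrite mule_ge0 // lee_fin W_ge0.
apply: le_trans (T1_le N); rewrite le_eqVlt; apply/orP; left; apply/eqP.
by apply: eq_esum => s _; case: ifP => _; rewrite ?mule0.
Qed.

Lemma pp_gt0 c0 : c0 \in supp x i -> f c0 i = b -> (0 < pp)%R.
Proof.
move=> Hc0 Hb; rewrite /pp (bigD1 c0) //= Hb eqxx.
apply: (@lt_le_trans _ _ (P x i c0)).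
  by rewrite /Astar_prob Hc0 invr_gt0 ltr0n; apply/card_gt0P; exists c0.
rewrite lerDl; apply: sumr_ge0 => c _; case: ifP => _ //; exact: P_ge0.
Qed.

Lemma WE1 c0 : c0 \in supp x i -> f c0 i = b -> WE (fun _ => 1) = 1.
Proof.
move=> Hc0 Hb; have hp := @pp_gt0 c0 Hc0 Hb.
have fin : WE (fun _ => 1) \is a fin_num.
  rewrite ge0_fin_numE; last by apply: WE_ge0.
  by apply: le_lt_trans WE1_le _; rewrite ltry.
set r := fine (WE (fun _ => 1)).
have E : WE (fun _ => 1) = r%:E by rewrite fineK.
have := WE_rec (fun _ => 1) (fun _ => lee01).
rewrite /= E (sum_eq 1 r) => -[] h2.
have h1 := pq1; have hq : qq = (1 - pp)%R by lra.
rewrite hq mulrBl mul1r in h2.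
have h3 : (pp * r = pp * 1)%R by lra.
by rewrite (mulfI (negbT (gt_eqF hp)) h3).
Qed.

Lemma T2_le N : (0 < pp)%R -> T2 N <= (pp^-1)%:E.
Proof.
move=> hp; elim: N => [|N IH].
  rewrite /T2 /WE esum1 ?lee_fin ?invr_ge0 ?ltW // => -[|c s] _.
    by rewrite W_nil mul0e.
  by rewrite /= mule0.
rewrite /T2 WE_rec; last by move=> s; case: ifP => // _; rewrite lee_fin.
apply: (@le_trans _ _ ((pp * 1 + qq * (1 + pp^-1))%R)%:E); last first.
  rewrite lee_fin le_eqVlt; apply/orP; left; apply/eqP.
  have h1 := pq1; have -> : qq = (1 - pp)%R by lra.
  by field; rewrite gt_eqF.
apply: sum_bound => c /=; first by rewrite lee_fin.
have -> : WE (fun s => if (size s < N.+1)%N then (size s).+1%:R%:E else 0)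
         = T1 N + T2 N.
  rewrite /T1 /T2 /WE -esumD; last 2 first.
  - by move=> s _; rewrite mule_ge0 // ?lee_fin ?W_ge0 //; case: ifP.
  - by move=> s _; rewrite mule_ge0 // ?lee_fin ?W_ge0 //; case: ifP.
  apply: eq_esum => s _; rewrite -ge0_muleDr; last 2 first.
  - by case: ifP.
  - by case: ifP => // _; rewrite lee_fin.
  by congr (_ * _); rewrite ltnS; case: ifP => _; rewrite ?adde0 // -nat1r EFinD.
by rewrite EFinD; apply: leeD => //; exact: T1_le.
Qed.

Lemma WEsize c0 : c0 \in supp x i -> f c0 i = b ->
  WE (fun s => (size s)%:R%:E) <= (pp^-1)%:E.
Proof.
move=> Hc0 Hb; have hp := @pp_gt0 c0 Hc0 Hb.
rewrite /WE; apply: esum_trunc => [s|N]; first by rewrite mule_ge0 // lee_fin ?W_ge0.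
apply: le_trans (T2_le N hp); rewrite le_eqVlt; apply/orP; left; apply/eqP.
by apply: eq_esum => s _; case: ifP => _; rewrite ?mule0.
Qed.

Lemma pp_eq : pp = (#|[set c | (c \in supp x i) && (f c i == b)]|%:R
                    / #|supp x i|%:R)%R.
Proof.
rewrite /pp /Astar_prob.
rewrite (eq_bigr (fun c => if c \in [set c | (c \in supp x i) && (f c i == b)]
                            then (#|supp x i|%:R)^-1 else 0)%R); last first.
  by move=> c _; rewrite inE andbC; case: (f c i == b).
by rewrite -big_mkcond /= sumr_const -[(_ *+ _)%R]mulr_natr mulrC.
Qed.

End Stage.

Section Run.
Variables (y xs : bits n).
Hypothesis Hy : f xs = y.
Local Open Scope ereal_scope.

Notation RW := (@run_weight R n f y).

Definition Ncard (k : nat) : R := (#|[set x' | agree k (f x') y]|%:R)%R.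
Definition Kst (st : seq 'I_n) : R := (\sum_(k <- st) Ncard k / Ncard k.+1)%R.

Lemma Kst_ge0 st : (0 <= Kst st)%R.
Proof. by apply: sumr_ge0 => k _; rewrite divr_ge0 // ler0n. Qed.

Definition PR st x := \esum_(css in [set: seq (seq (bits n))]) ((RW st x css)%:E * 1).
Definition CR st x := \esum_(css in [set: seq (seq (bits n))])
   ((RW st x css)%:E * (sumn (map size css))%:R%:E).

Lemma RW_ge0 st x css : (0 <= RW st x css)%R.
Proof.
elim: st x css => [|i st IH] x [|cs css] //=.
by rewrite mulr_ge0 // W_ge0.
Qed.

Lemma dec (i : 'I_n) st x (phi : seq (seq (bits n)) -> \bar R) :
  (forall css, 0 <= phi css) ->
  \esum_(css in [set: seq (seq (bits n))]) ((RW (i :: st) x css)%:E * phi css) =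
  \esum_(cs in [set: seq (bits n)]) \esum_(css in [set: seq (seq (bits n))])
     ((W x (y i) i cs)%:E * ((RW st (last x cs) css)%:E * phi (cs :: css))).
Proof.
move=> h0; rewrite esum_seqE; last by move=> css; rewrite mule_ge0 // lee_fin RW_ge0.
rewrite /= mul0e add0e; apply: eq_esum => cs _; apply: eq_esum => css _.
by rewrite /= EFinM muleA.
Qed.

Lemma supp_eq x (i : 'I_n) : agree i (f x) y -> supp x i = [set x' | agree i (f x') y].
Proof.
move=> Hx; apply/setP => z; rewrite !inE; apply/idP/idP => h.
  exact: agree_trans h Hx.
by apply: agree_trans h _; rewrite agree_sym.
Qed.

Lemma run_main st : forall j x, map val st = iota j (size st) -> agree j (f x) y ->
  PR st x = 1 /\ CR st x <= (Kst st)%:E.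
Proof.
elim: st => [|i st IH] j x Hst Hx.
  split.
    rewrite /PR esum_seqE; last by move=> css; rewrite mule_ge0 // lee_fin RW_ge0.
    rewrite /= mule1 esum1 ?adde0 // => cs _.
    by rewrite esum1 // => css _; rewrite /= mul0e.
  rewrite /CR esum1 /Kst ?big_nil // => -[|cs css] _ /=; first by rewrite mule0.
  by rewrite mul0e.
move: Hst => /= [Hi Hst].
have Hxi : agree i (f x) y by rewrite Hi.
have Hc0 : xs \in supp x i by rewrite inE Hy agree_sym.
have Hb0 : f xs i = y i by rewrite Hy.
have Hlast cs : W x (y i) i cs != 0%R ->
    PR st (last x cs) = 1 /\ CR st (last x cs) <= (Kst st)%:E.
  move=> /W_last /andP[Hz Hzi]; apply: (IH j.+1) => //.
  rewrite -Hi agreeS Hzi andbT; apply: agree_trans Hxi.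
  by move: Hz; rewrite inE.
have Winner cs : \esum_(css in [set: seq (seq (bits n))])
     ((W x (y i) i cs)%:E * ((RW st (last x cs) css)%:E * 1)) =
     (W x (y i) i cs)%:E * PR st (last x cs).
  rewrite esumZl //; first exact: W_ge0.
  by move=> css; rewrite mule_ge0 // lee_fin RW_ge0.
have PR1 : PR (i :: st) x = 1.
  rewrite /PR dec; last by [].
  under eq_esum do rewrite Winner.
  rewrite -(@WE1 x (y i) i xs Hc0 Hb0) /WE; apply: eq_esum => cs _.
  have [->|Hw] := eqVneq (W x (y i) i cs) 0%R; first by rewrite !mul0e.
  by rewrite (Hlast cs Hw).1.
split => //.
rewrite /CR dec; last by move=> css; rewrite lee_fin.
have Cinner cs : \esum_(css in [set: seq (seq (bits n))])
     ((W x (y i) i cs)%:E * ((RW st (last x cs) css)%:E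
        * (sumn (map size (cs :: css)))%:R%:E)) =
     (W x (y i) i cs)%:E * ((size cs)%:R%:E * PR st (last x cs) + CR st (last x cs)).
  rewrite esumZl //; last first.
    by move=> css; rewrite mule_ge0 // lee_fin ?RW_ge0.
    exact: W_ge0.
  congr (_ * _); rewrite /PR /CR -esumZl //; last first.
    by move=> css; rewrite mule_ge0 // lee_fin ?RW_ge0.
  rewrite -esumD; last 2 first.
  - by move=> css _; rewrite !mule_ge0 // lee_fin ?RW_ge0.
  - by move=> css _; rewrite !mule_ge0 // lee_fin ?RW_ge0.
  apply: eq_esum => css _; rewrite /= natrD EFinD ge0_muleDr ?lee_fin //.
  by rewrite mule1 muleC.
under eq_esum do rewrite Cinner.
apply: (@le_trans _ _ (\esum_(cs in [set: seq (bits n)])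
   ((W x (y i) i cs)%:E * (size cs)%:R%:E + (Kst st)%:E * ((W x (y i) i cs)%:E * 1)))).
  apply: le_esum => cs _.
  have [->|Hw] := eqVneq (W x (y i) i cs) 0%R; first by rewrite !mul0e mule0 adde0.
  have [-> HC] := Hlast cs Hw.
  rewrite !mule1 [X in _ <= _ + X]muleC -ge0_muleDr ?lee_fin ?Kst_ge0 //.
  apply: lee_wpmul2l; first by rewrite lee_fin W_ge0.
  by apply: leeD.
rewrite esumD; last 2 first.
- by move=> cs _; rewrite mule_ge0 // lee_fin ?W_ge0.
- by move=> cs _; rewrite !mule_ge0 // lee_fin ?W_ge0 ?Kst_ge0.
rewrite esumZl; last 2 first.
- exact: Kst_ge0.
- by move=> cs; rewrite mule_ge0 // lee_fin ?W_ge0.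
have E1 := @WE1 x (y i) i xs Hc0 Hb0; rewrite /WE in E1; rewrite E1 mule1.
have E2 := @WEsize x (y i) i xs Hc0 Hb0; rewrite /WE in E2.
apply: le_trans (leeD E2 (lexx _)) _.
rewrite -EFinD lee_fin /Kst big_cons -/(Kst st) pp_eq invf_div (@supp_eq x i Hxi).
have -> : [set c | (c \in [set x' | agree i (f x') y]) && (f c i == y i)] =
          [set x' | agree i.+1 (f x') y].
  by apply/setP => z; rewrite !inE agreeS.
by [].
Qed.

End Run.

Local Open Scope ereal_scope.

Definition MM : R := (#|{: bits n}|%:R)%R.

Lemma MM_neq0 : MM != 0%R.
Proof.
by rewrite /MM pnatr_eq0 -lt0n; apply/card_gt0P; exists [ffun => false].
Qed.

Lemma sumMM : \sum_(x0 : bits n) (MM^-1)%:E = 1.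
Proof.
by rewrite sumEFin sumr_const -[(_ *+ _)%R]mulr_natr mulVf // MM_neq0.
Qed.

Lemma expected_le y xs : f xs = y ->
  @expected_calls R n f y <= (Kst y (enum 'I_n))%:E.
Proof.
move=> Hy.
have Hrun x0 := @run_main y xs Hy (enum 'I_n) 0 x0
   (etrans (val_enum_ord n) (congr1 (iota 0) (esym (size_enum_ord n)))) (agree0 _ _).
have S1 : \esum_(t in [set: bits n * seq (seq (bits n))]) (@trace_weight R n f y t)%:E = 1.
  rewrite esum_pairE; last by move=> t; rewrite lee_fin mulr_ge0 ?RW_ge0 // invr_ge0 ler0n.
  rewrite -sumMM -esum_finT; last by move=> x0; rewrite lee_fin invr_ge0 ler0n.
  apply: eq_esum => x0 _.
  rewrite -[RHS]mule1 -(Hrun x0).1 /PR -esumZl; last 2 first.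
  - by rewrite invr_ge0 ler0n.
  - by move=> css; rewrite mule_ge0 // lee_fin RW_ge0.
  by apply: eq_esum => css _; rewrite /trace_weight /= mule1 EFinM.
rewrite /expected_calls S1 eqxx.
rewrite esum_pairE; last first.
  by move=> t; rewrite lee_fin mulr_ge0 // /trace_weight mulr_ge0 ?RW_ge0 // invr_ge0 ler0n.
apply: (@le_trans _ _ (\esum_(x0 in [set: bits n]) ((MM^-1)%:E * (Kst y (enum 'I_n))%:E))).
  apply: le_esum => x0 _.
  apply: le_trans (lee_wpmul2l _ (Hrun x0).2); last by rewrite lee_fin invr_ge0 ler0n.
  rewrite -esumZl; last 2 first.
  - by rewrite invr_ge0 ler0n.
  - by move=> css; rewrite mule_ge0 // lee_fin ?RW_ge0.
  rewrite le_eqVlt; apply/orP; left; apply/eqP.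
  by apply: eq_esum => css _; rewrite /trace_weight /trace_calls /= EFinM muleA.
rewrite esum_finT; last by move=> x0; rewrite mule_ge0 // lee_fin ?invr_ge0 ?ler0n ?Kst_ge0.
by rewrite -ge0_sume_distrl ?sumMM ?mul1e // => x0 _; rewrite lee_fin invr_ge0 ler0n.
Qed.

Local Open Scope ring_scope.
Lemma comb (k : 'I_n) :
  (\sum_(x : bits n) Ncard (f x) k / Ncard (f x) k.+1 <= 2 * MM)%R.
Proof.
have step1 x : (Ncard (f x) k / Ncard (f x) k.+1 =
    \sum_(x' : bits n) (if agree k (f x') (f x) then (Ncard (f x) k.+1)^-1 else 0))%R.
  rewrite (eq_bigr (fun x' => if x' \in [set z | agree k (f z) (f x)]
              then (Ncard (f x) k.+1)^-1 else 0)%R); last by move=> x' _; rewrite inE.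
  by rewrite -big_mkcond sumr_const -[(_ *+ _)%R]mulr_natr mulrC /Ncard.
under eq_bigr do rewrite step1.
rewrite exchange_big /=.
apply: (@le_trans _ _ (\sum_(x' : bits n) 2)%R); last first.
  by rewrite sumr_const -[(_ *+ _)%R]mulr_natr.
apply: ler_sum => x' _.
have gb b : (\sum_(x : bits n) (if agree k (f x) (f x') && (f x k == b)
              then (Ncard (f x) k.+1)^-1 else 0) <= 1)%R.
  set G := [set z | agree k (f z) (f x') && (f z k == b)].
  rewrite (eq_bigr (fun x => if x \in G then (#|G|%:R)^-1 else 0)%R); last first.
    move=> x _; rewrite inE; case: ifP => // hx; congr (_^-1); rewrite /Ncard.
    congr (_%:R); apply: eq_card => z; rewrite !inE agreeS.
    case/andP: hx => h1 /eqP h2; rewrite h2; congr (_ && _).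
    apply/idP/idP => h; first exact: agree_trans h h1.
    by apply: agree_trans h _; rewrite agree_sym.
  rewrite -big_mkcond sumr_const.
  have [->|hG] := eqVneq #|G| 0%N; first by rewrite mulr0n ler01.
  by rewrite -[(_ *+ _)%R]mulr_natr mulVf // pnatr_eq0.
rewrite (eq_bigr (fun x => (if agree k (f x) (f x') && (f x k == true)
     then (Ncard (f x) k.+1)^-1 else 0) + (if agree k (f x) (f x') && (f x k == false)
     then (Ncard (f x) k.+1)^-1 else 0))); last first.
  by move=> x _; rewrite agree_sym; case: (agree _ _ _); case: (f x k); rewrite ?addr0 ?add0r.
rewrite big_split /=; apply: le_trans (lerD (gb true) (gb false)) _.
lra.
Qed.

Lemma final : (\sum_(x : bits n) ((MM^-1)%:E * (Kst (f x) (enum 'I_n))%:E) <= (2 * n)%:R%:E)%E.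
Proof.
under eq_bigr do rewrite -EFinM.
rewrite sumEFin lee_fin -mulr_sumr.
have H : \sum_(x : bits n) Kst (f x) (enum 'I_n) <= (2 * n)%:R * MM.
  rewrite /Kst exchange_big /=.
  apply: (@le_trans _ _ (\sum_(k <- enum 'I_n) 2 * MM)).
    by apply: ler_sum => k _; exact: comb.
  rewrite big_enum sumr_const card_ord -[(_ *+ _)%R]mulr_natr natrM.
  by rewrite mulrAC.
apply: le_trans (ler_wpM2l _ H) _; first by rewrite invr_ge0 ler0n.
by rewrite mulrC mulfK ?MM_neq0.
Qed.


End Main.

Theorem lemma4p2 (R : realType) (n : nat) (f : bits n -> bits n) :
  (@expected_calls_random R n f <= (2 * n)%:R%:E)%E.
Proof.
rewrite /expected_calls_random.
apply: le_trans (@final R n f).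
apply: lee_sum => x _; apply: lee_wpmul2l; first by rewrite lee_fin invr_ge0 ler0n.
exact: (@expected_le R n f (f x) x erefl).
Qed.
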